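(* Let $h$ be the state on $U_n^{nc}$ defined below. Let $1\le i_1,j_1,\dots,i_r,j_r\le n$ and $\epsilon_1,\dots,\epsilon_r\in\{\emptyset,*\}$. If $\#\{m:\epsilon_m=*\}\ne\#\{m:\epsilon_m=\emptyset\}$, then $h(u^{\epsilon_1}_{i_1j_1}\cdots u^{\epsilon_r}_{i_rj_r})=0$. If $\#\{m:\epsilon_m=*\}=\#\{m:\epsilon_m=\emptyset\}$, then $$h(u^{\epsilon_1}_{i_1j_1}\cdots u^{\epsilon_r}_{i_rj_r})=\prod_{k=-r}^{r}h\Big(\prod^{\rightarrow}_{l\in S_k}u^{\epsilon_l}_{i_lj_l}\Big),$$ where $S_k=\{l\in\{1,\dots,r\}:k=\#\{m>l:\epsilon_m=\emptyset\}-\#\{m\ge l:\epsilon_m=*\}\}$, $\prod^{\rightarrow}$ denotes the product in increasing order of $l$, and an empty product equals $1$ (so $h$ of it is $1$).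
   Context: $U_n^{nc}$ is the universal unital $*$-algebra generated by $u_{ij}$ ($1\le i,j\le n$) with $\sum_ku_{ki}^*u_{kj}=\delta_{ij}=\sum_ku_{ik}u_{jk}^*$; $u^{\emptyset}_{ij}=u_{ij}$. Let $H=\ell^2(\mathbb Z)\otimes\bigotimes_{k\in\mathbb Z}M_n(\mathbb C)$, where $M_n(\mathbb C)$ is a Hilbert space with inner product $\langle A,B\rangle=\mathrm{Tr}(A^*B)/n$ and the infinite tensor product is taken with respect to the reference vector $I_n$; $(\delta_k)$ is the standard basis of $\ell^2(\mathbb Z)$ and $E_{ij}$ the matrix units. Define $U_{ij}(\delta_k\otimes(\cdots\otimes M_{k-1}\otimes M_k\otimes M_{k+1}\otimes\cdots))=\delta_{k+1}\otimes(\cdots\otimes M_{k-1}\otimes E_{ji}M_k\otimes M_{k+1}\otimes\cdots)$, with adjoint $U_{ij}^*(\delta_k\otimes(\cdots\otimes M_{k-1}\otimes\cdots))=\delta_{k-1}\otimes(\cdots\otimes E_{ij}M_{k-1}\otimes M_k\otimes\cdots)$. Let $j:U_n^{nc}\to B(H)$ be the unital $*$-homomorphism with $j(u_{ij})=U_{ij}$, $\Omega=\delta_0\otimes\bigotimes_kI_n$, and $h(a)=\langle\Omega,j(a)\Omega\rangle$. *)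

(* Defs.v *)
From HB Require Import structures.
From mathcomp Require Import all_boot all_order all_algebra all_field.
Set Implicit Arguments. Unset Strict Implicit. Unset Printing Implicit Defensive.
Import Order.TTheory GRing.Theory Num.Theory.
Local Open Scope ring_scope.

(* A letter u^{eps}_{ij}: (eps, i, j) with eps = true meaning "*". *)
Definition letter (n : nat) := (bool * 'I_n * 'I_n)%type.

(* Elementary tensors delta_k (x) (x)_l M_l of H; all factors but finitely
   many equal I_n. *)
Definition conf (n : nat) := (int * (int -> 'M[algC]_n))%type.

Definition upd n (f : int -> 'M[algC]_n) (p : int) (M : 'M[algC]_n) :=
  fun q => if q == p then M else f q.

(* Action of U_{ij} (eps = false) and U_{ij}^* (eps = true) on elementary
   tensors. E_{ij} = delta_mx i j. *)
Definition act n (x : letter n) (s : conf n) : conf n :=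
  let: (e, i, j) := x in
  let: (k, f) := s in
  if e then (k - 1, upd f (k - 1) (delta_mx i j *m f (k - 1)))
  else (k + 1, upd f k (delta_mx j i *m f k)).

Definition Omega n : conf n := (0, fun _ => 1%:M).

Definition apply_word n (w : seq (letter n)) : conf n := foldr (@act n) (Omega n) w.

(* h(u^{e1}_{i1j1} ... u^{er}_{irjr}) = <Omega, j(...) Omega>
   = [k = 0] * prod_l <I_n, M_l> with <I_n, M> = Tr(M)/n.
   Only positions in [-r, r] can carry a factor different from I_n
   (whose contribution <I_n,I_n> is 1), so the product is taken there. *)
Definition h n (w : seq (letter n)) : algC :=
  let: (k, f) := apply_word w in
  if k == 0 then
    \prod_(t < (size w).*2.+1) (\tr (f (t%:Z - (size w)%:Z)) / n%:R)
  else 0.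

Definition count_star n (w : seq (letter n)) : nat := count (fun x => x.1.1) w.
Definition count_nostar n (w : seq (letter n)) : nat := count (fun x => ~~ x.1.1) w.

(* S_k (0-based l): k = #{m > l : eps_m = emptyset} - #{m >= l : eps_m = *};
   the subword of w at positions in S_k, in increasing order. *)
Definition Sword n (w : seq (letter n)) (k : int) : seq (letter n) :=
  mask [seq k == ((count_nostar (drop l.+1 w))%:Z - (count_star (drop l w))%:Z)
       | l <- iota 0 (size w)] w.

(* Main.v *)
Require Import Defs.
From HB Require Import structures.
From mathcomp Require Import all_boot all_order all_algebra all_field.
From mathcomp Require Import zify.
Import Order.TTheory GRing.Theory Num.Theory.
Set Implicit Arguments. Unset Strict Implicit. Unset Printing Implicit Defensive.
Local Open Scope ring_scope.

Definition pos n (w : seq (letter n)) : int := (count_nostar w)%:Z - (count_star w)%:Z.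
Definition site n (x : letter n) (w : seq (letter n)) : int :=
  if x.1.1 then pos w - 1 else pos w.
Definition Em n (x : letter n) : 'M[algC]_n :=
  let: (e,i,j) := x in if e then delta_mx i j else delta_mx j i.
Fixpoint Mat n (w : seq (letter n)) (q : int) : 'M[algC]_n :=
  match w with [::] => 1%:M
  | x :: w' => if site x w' == q then Em x *m Mat w' q else Mat w' q end.

Lemma pos_cons n (x : letter n) w :
  pos (x :: w) = if x.1.1 then pos w - 1 else pos w + 1.
Proof. rewrite /pos /count_nostar /count_star /=; case: (x.1.1) => /=; lia. Qed.

Lemma aw n (w : seq (letter n)) :
  (apply_word w).1 = pos w /\ forall q, (apply_word w).2 q = Mat w q.
Proof.
elim: w => [|x w [IH1 IH2]]; first by split => //.
rewrite /apply_word /= -/(apply_word w).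
case: (apply_word w) IH1 IH2 => k f /= -> IH2.
rewrite pos_cons /site.
case: x => [[e i] j] /=; case: e => /=; split => // q; rewrite /upd IH2;
  by case: eqP => [->|]; case: eqP => // ->.
Qed.

Lemma Sword_cons n (x : letter n) w k :
  Sword (x :: w) k = if site x w == k then x :: Sword w k else Sword w k.
Proof.
rewrite /Sword /= -[1%N]/(1 + 0)%N iotaDl -map_comp drop0.
have -> : (k == (count_nostar w)%:Z - (x.1.1 + count_star w)%N%:Z) = (site x w == k).
  rewrite /site /pos; case: (x.1.1) => /=; apply/eqP/eqP; lia.
have -> : [seq ((fun l : nat =>
                k ==
                (count_nostar (drop l w))%:Z -
                (count_star (drop l (x :: w)))%:Z) \o addn 1) i
            | i <- iota 0 (size w)] =
  [seq k == (count_nostar (drop l.+1 w))%:Z - (count_star (drop l w))%:Z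
       | l <- iota 0 (size w)] by apply: eq_map.
by [].
Qed.

Definition cc (p k : int) : int := (if k < p then 1 else 0) - (if k < 0 then 1 else 0).
Definition sk (k : int) : int := if k < 0 then -1 else 0.

Lemma pos_Sword n (w : seq (letter n)) k : pos (Sword w k) = cc (pos w) k.
Proof.
elim: w => [|[[e i] j] w IH].
  by rewrite /Sword /pos /cc /=; repeat case: ifP => ?; lia.
rewrite Sword_cons /site /=; case: e; rewrite /= pos_cons /=;
  case: eqP => E; rewrite ?pos_cons /= IH /cc; repeat case: ifP => ?; lia.
Qed.

Lemma Mat_Sword n (w : seq (letter n)) k q :
  Mat (Sword w k) q = if q == sk k then Mat w k else 1%:M.
Proof.
elim: w => [|x w IH]; first by rewrite /Sword /=; case: ifP.
rewrite Sword_cons; case: eqP => E /=; last by rewrite IH; move/eqP/negbTE: E => ->.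
rewrite E eqxx.
have -> : site x (Sword w k) = sk k.
  move: E; rewrite /site pos_Sword /cc /sk; case: (x.1.1) => E;
  repeat case: ifP => ?; lia.
rewrite IH; case: eqP => [->|]; first by rewrite eqxx.
by move=> /nesym/eqP/negbTE ->.
Qed.

Lemma hE n (w : seq (letter n)) : h w = if pos w == 0 then
   \prod_(t < (size w).*2.+1) (\tr (Mat w (t%:Z - (size w)%:Z)) / n%:R) else 0.
Proof.
rewrite /h; have [e1 e2] := aw w; case: (apply_word w) e1 e2 => k f /= -> e2.
case: ifP => // _; apply: eq_bigr => t _; by rewrite e2.
Qed.

Lemma prod_one n (hn : (0 < n)%N) m (t0 : 'I_m) (M : 'M[algC]_n) F :
  (forall t, F t = if t == t0 then M else 1%:M) ->
  \prod_(t < m) (\tr (F t) / n%:R) = \tr M / n%:R.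
Proof.
move=> H; rewrite (bigD1 t0) //= big1 ?mulr1; first by rewrite H eqxx.
move=> t /negbTE ne; rewrite H ne mxtrace1 divff // pnatr_eq0 -lt0n //.
Qed.

Lemma hS n (hn : (0 < n)%N) (w : seq (letter n)) k : pos w = 0 ->
  h (Sword w k) = \tr (Mat w k) / n%:R.
Proof.
move=> H0; rewrite hE pos_Sword H0.
have -> : cc 0 k = 0 by rewrite /cc; repeat case: ifP => ?; lia.
rewrite eqxx; set N := size (Sword w k).
case: (boolP (k < 0)) => kneg; last first.
  have lt : (N < N.*2.+1)%N by rewrite ltnS -addnn leq_addr.
  apply: (prod_one hn (t0 := Ordinal lt) (F := fun t : 'I_N.*2.+1 => Mat (Sword w k) (t%:Z - N%:Z))) => t; rewrite Mat_Sword /sk (negbTE kneg).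
  congr (if _ then _ else _); apply/eqP/eqP => [e|->]; last by rewrite /=; lia.
  by apply: val_inj => /=; lia.
case: (posnP N) => Npos.
  have M1 : Mat w k = 1%:M.
    have := Mat_Sword w k (sk k); rewrite eqxx => <-.
    by move: Npos; rewrite /N; case: (Sword w k).
  apply: (prod_one hn (t0 := @ord0 N.*2) (F := fun t : 'I_N.*2.+1 => Mat (Sword w k) (t%:Z - N%:Z))) => t; rewrite Mat_Sword M1; by case: ifP; case: ifP.
have lt : (N.-1 < N.*2.+1)%N by rewrite ltnS -addnn; lia.
apply: (prod_one hn (t0 := Ordinal lt) (F := fun t : 'I_N.*2.+1 => Mat (Sword w k) (t%:Z - N%:Z))) => t; rewrite Mat_Sword /sk kneg.
congr (if _ then _ else _); apply/eqP/eqP => [e|->]; last by rewrite /=; lia.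
by apply: val_inj => /=; lia.
Qed.

Theorem mainTheorem9 (n : nat) (hn : (0 < n)%N) (w : seq (letter n)) :
  (count_star w <> count_nostar w -> h w = 0) /\
  (count_star w = count_nostar w ->
     h w = \prod_(t < (size w).*2.+1) h (Sword w (t%:Z - (size w)%:Z))).
Proof.
split=> Hc; rewrite hE.
  by case: eqP => // E; exfalso; apply: Hc; move: E; rewrite /pos; lia.
have H0 : pos w = 0 by rewrite /pos Hc subrr.
rewrite H0 eqxx; apply: eq_bigr => t _; by rewrite hS.
Qed.
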